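(* Let $\mathcal P$ be a CPOS $2n$-gon. Let $A^+$ be the area of the polygon $P_1P_2\cdots P_{n+1}$ and $A^-$ the area of the polygon $P_{n+1}P_{n+2}\cdots P_{2n}P_1$ (the two parts into which the great diagonal $P_1P_{n+1}$ divides $\mathcal P$). Then $$A^- - A^+ = 2\sum_{j=1}^n\big[v(j+\tfrac12),u_j\big].$$
   Context: A CPOS $2n$-gon ($n\ge2$) is a closed planar polygon $\mathcal P$ with vertices $P_1,\dots,P_{2n}$ (indices mod $2n$) bounding a convex region, with no two adjacent sides parallel, with $P_{i+n+1}-P_{i+n}$ parallel to $P_{i+1}-P_i$ for all $i$, and positively oriented: $[P_{i+1}-P_i,P_{j+1}-P_j]>0$ for $1\le i<j\le n$, where $[a,b]$ is the determinant of $a,b\in\mathbb R^2$. $M_i=\tfrac12(P_i+P_{i+n})$ (so $M_{n+1}=M_1$). For $1\le i\le n$ set $v(i+\tfrac12)=M_{i+1}-M_i$ and $u_i=P_i-M_i$. *)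

(* Defs.v *)
From HB Require Import structures.
From mathcomp Require Import all_boot all_order all_algebra.
Set Implicit Arguments. Unset Strict Implicit. Unset Printing Implicit Defensive.
Import Order.TTheory GRing.Theory Num.Theory.
Local Open Scope ring_scope.

Section Geo.
Variable R : realFieldType.

Definition pt := (R * R)%type.

(* [a,b] : the determinant of a, b *)
Definition det (a b : pt) : R := a.1 * b.2 - a.2 * b.1.
Definition vadd (a b : pt) : pt := (a.1 + b.1, a.2 + b.2).
Definition vsub (a b : pt) : pt := (a.1 - b.1, a.2 - b.2).
Definition vhalf (a : pt) : pt := (a.1 / 2, a.2 / 2).

Definition edge (P : nat -> pt) (i : nat) : pt := vsub (P i.+1) (P i).

(* CPOS 2n-gon: vertices P_1..P_{2n}, indices mod 2n (P periodic of period 2n). *)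
Definition CPOS (n : nat) (P : nat -> pt) : Prop :=
  (2 <= n)%N /\
      (forall i, P (i + 2 * n)%N = P i) /\
      (* bounds a convex region (positively traversed): every vertex lies
         on the left (closed) side of the line of every side *)
      (forall i k, 0 <= det (edge P i) (vsub (P k) (P i))) /\
      (forall i, det (edge P i) (edge P i.+1) != 0) /\
      (forall i, det (edge P (i + n)%N) (edge P i) = 0) /\
      (forall i j, (1 <= i)%N -> (i < j)%N -> (j <= n)%N ->
                   0 < det (edge P i) (edge P j)).

Definition midp (n : nat) (P : nat -> pt) (i : nat) : pt :=
  vhalf (vadd (P i) (P (i + n)%N)).
(* v(i + 1/2) = M_{i+1} - M_i *)
Definition vhalfidx (n : nat) (P : nat -> pt) (i : nat) : pt :=
  vsub (midp n P i.+1) (midp n P i).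
Definition uvec (n : nat) (P : nat -> pt) (i : nat) : pt :=
  vsub (P i) (midp n P i).

(* Area of the (simple) closed polygon with vertex list s, via the
   shoelace formula: |sum_k [Q_k, Q_{k+1}]| / 2 (indices cyclic). *)
Definition polyArea (s : seq pt) : R :=
  `| \sum_(k < size s) det (nth (0, 0) s k) (nth (0, 0) s ((k.+1) %% size s)) | / 2.

End Geo.

(* Main.v *)
Require Import Defs.
From HB Require Import structures.
From mathcomp Require Import all_boot all_order all_algebra.
From mathcomp Require Import ring lra zify.
Import Order.TTheory GRing.Theory Num.Theory.
Local Open Scope ring_scope.

Section S.
Variable R : realFieldType.
Implicit Types (P Q : nat -> pt R).

Lemma shoelace Q a m :
  \sum_(k < size [seq Q i | i <- iota a m.+1])
     det (nth (0,0) [seq Q i | i <- iota a m.+1] k)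
         (nth (0,0) [seq Q i | i <- iota a m.+1] (k.+1 %% size [seq Q i | i <- iota a m.+1]))
  = \sum_(0 <= k < m) det (Q (a+k)%N) (Q (a+k).+1) + det (Q (a+m)%N) (Q a).
Proof.
have E k : (k <= m)%N -> nth (0,0) [seq Q i | i <- iota a m.+1] k = Q (a+k)%N.
  by move=> hk; rewrite (nth_map 0%N) ?size_iota // nth_iota.
rewrite size_map size_iota.
rewrite (eq_bigr (fun k : 'I_m.+1 => det (Q (a+k)%N) (Q (a + (k.+1 %% m.+1))%N))); last first.
  move=> k _; rewrite !E // -ltnS ?ltn_pmod //.
rewrite big_ord_recr modnn big_mkord addn0 /=; congr (_ + _); apply: eq_bigr => k _.
have hk := ltn_ord k.
by rewrite modn_small ?ltnS // addnS.
Qed.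

Lemma det_sub3 (x y z : pt R) : det (vsub x z) (vsub y z) = det x y + det z x - det z y.
Proof. case: x => ? ?; case: y => ? ?; case: z => ? ? /=; rewrite /det /=; ring. Qed.

Lemma fan Q a m :
  \sum_(0 <= k < m) det (Q (a+k)%N) (Q (a+k).+1) + det (Q (a+m)%N) (Q a)
  = \sum_(0 <= k < m) det (vsub (Q (a+k)%N) (Q a)) (vsub (Q (a+k).+1) (Q a)).
Proof.
elim: m => [|m IH].
  rewrite !big_geq // addn0 add0r; case: (Q a) => ? ?; rewrite /det /=; ring.
rewrite !big_nat_recr //= -IH det_sub3 -addnS.
case: (Q (a+m)%N) (Q (a + m.+1)%N) (Q a) => ? ? [? ?] [? ?]; rewrite /det /=; ring.
Qed.

Lemma fan_ge0 P n a m : CPOS n P ->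
  0 <= \sum_(0 <= k < m) det (vsub (P (a+k)%N) (P a)) (vsub (P (a+k).+1) (P a)).
Proof.
move=> [_ [_ [cv _]]]; apply: sumr_ge0 => k _.
have := cv (a+k)%N a; rewrite /edge.
case: (P (a+k)%N) (P (a+k).+1) (P a) => ? ? [? ?] [? ?]; rewrite /det /=; lra.
Qed.

Lemma term P n j : det (edge P (j + n)%N) (edge P j) = 0 ->
  4 * det (vhalfidx n P j) (uvec n P j) =
  det (P (j+n)%N) (P (j.+1+n)%N) - det (P j) (P j.+1)
  + (det (P j) (P (j+n)%N) - det (P j.+1) (P (j.+1+n)%N)).
Proof.
rewrite /vhalfidx /uvec /midp /edge addSn.
case: (P j) (P j.+1) (P (j+n)%N) (P (j+n).+1) => a1 a2 [b1 b2] [c1 c2] [d1 d2].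
rewrite /det /vhalf /vadd /vsub /= => h.
have -> : forall x : R, x / 2 = x * (1/2) by move=> x; rewrite mul1r.
have h2 : (1/2:R) * 2 = 1 by rewrite mul1r mulVf // pnatr_eq0.
nra.
Qed.

Lemma key P n : CPOS n P ->
  \sum_(0 <= k < n) 4 * det (vhalfidx n P k.+1) (uvec n P k.+1) =
  (\sum_(0 <= k < n) det (P (n.+1 + k)%N) (P (n.+1 + k).+1) + det (P (n.+1 + n)%N) (P n.+1))
  - (\sum_(0 <= k < n) det (P (1 + k)%N) (P (1 + k).+1) + det (P (1 + n)%N) (P 1%N)).
Proof.
move=> cp; have [_ [per [_ [_ [par _]]]]] := cp.
rewrite (eq_bigr (fun k => (det (P (n.+1 + k)%N) (P (n.+1 + k).+1) - det (P (1 + k)%N) (P (1 + k).+1))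
    + (det (P k.+1) (P (k.+1 + n)%N) - det (P k.+2) (P (k.+2 + n)%N)))); last first.
  move=> k _; rewrite term ?par //.
  have -> : (n.+1 + k = k.+1 + n)%N by rewrite addSn addnC.
  by rewrite add1n addSn.
rewrite big_split /= sumrB.
rewrite (@telescope_sumr_eq _ 0%N n (fun k => - det (P k.+1) (P (k.+1 + n)%N)) (fun i => det (P i.+1) (P (i.+1 + n)%N) - det (P i.+2) (P (i.+2 + n)%N))) //; last first.
  by move=> k _ /=; rewrite opprK addrC.
have -> : (n.+1 + n = 1 + 2 * n)%N by rewrite mul2n -addnn addSn add1n.
rewrite per /=.
case: (P 1%N) (P n.+1) => ? ? [? ?]; rewrite /det /=; ring.
Qed.
End S.

Theorem mainTheorem8 (R : realFieldType) (n : nat) (P : nat -> pt R) :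
  CPOS n P ->
  let Aplus := polyArea [seq P i | i <- iota 1 n.+1] in
  let Aminus := polyArea ([seq P i | i <- iota n.+1 n] ++ [:: P 1%N]) in
  Aminus - Aplus = 2 * \sum_(1 <= j < n.+1) det (vhalfidx n P j) (uvec n P j).
Proof.
move=> cp Ap Am.
have [_ [per _]] := cp.
have El : [seq P i | i <- iota n.+1 n] ++ [:: P 1%N] = [seq P i | i <- iota n.+1 n.+1].
  rewrite (_ : iota n.+1 n.+1 = iota n.+1 (n + 1)); last by rewrite addn1.
  rewrite iotaD map_cat /=.
  have -> : (n.+1 + n = 1 + 2 * n)%N by rewrite mul2n -addnn addSn add1n.
  by rewrite per.
rewrite /Am /Ap El /polyArea !shoelace.
rewrite ger0_norm; last by rewrite fan; exact: (fan_ge0 R P n n.+1 n cp).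
rewrite ger0_norm; last by rewrite fan; exact: (fan_ge0 R P n 1 n cp).
have K := key R P n cp.
rewrite -mulr_sumr in K.
rewrite big_add1 /=.
move: K; set X := \sum_(0 <= k < n) _; set S1 := \sum_(0 <= k < n) _; set S2 := \sum_(0 <= k < n) _.
move=> K; lra.
Qed.
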